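(* Let $\mathcal{D}$ be an observational ODE (clamped set $\emptyset$), $I\subseteq\mathcal{I}$ and $\boldsymbol{\xi}_I\in\mathcal{R}_I$. Suppose both $\mathcal{D}$ and $\mathcal{D}_{\mathrm{do}(\mathbf{X}_I=\boldsymbol{\xi}_I)}$ are structurally stable, and let $\mathcal{M}_{\mathcal{E}_{\mathcal{D}}}$ and $\mathcal{M}_{\mathcal{E}_{\mathcal{D}_{\mathrm{do}(\mathbf{X}_I=\boldsymbol{\xi}_I)}}}$ be induced SCMs of the induced LEEs $\mathcal{E}_{\mathcal{D}}$ and $\mathcal{E}_{\mathcal{D}_{\mathrm{do}(\mathbf{X}_I=\boldsymbol{\xi}_I)}}$ (constructed as in the context, using the sets $I_i$ witnessing structural stability). Then: (i) The following square commutes: $(\mathcal{E}_{\mathcal{D}})_{\mathrm{do}(\mathbf{X}_I=\boldsymbol{\xi}_I)}=\mathcal{E}_{\mathcal{D}_{\mathrm{do}(\mathbf{X}_I=\boldsymbol{\xi}_I)}}$ and $(\mathcal{M}_{\mathcal{E}_{\mathcal{D}}})_{\mathrm{do}(\mathbf{X}_I=\boldsymbol{\xi}_I)}=\mathcal{M}_{\mathcal{E}_{\mathcal{D}_{\mathrm{do}(\mathbf{X}_I=\boldsymbol{\xi}_I)}}}$. (ii) If moreover $\mathcal{D}$ is stable with respect to $\{I\}$, then the SCM $\mathcal{M}_{\mathcal{E}_{\mathcal{D}_{\mathrm{do}(\mathbf{X}_I=\boldsymbol{\xi}_I)}}}$ has a unique solution, and it coincides with the stable equilibrium $\mathbf{X}^*_{\mathrm{do}(\mathbf{X}_I=\boldsymbol{\xi}_I)}$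 of the intervened ODE $\mathcal{D}_{\mathrm{do}(\mathbf{X}_I=\boldsymbol{\xi}_I)}$.
   Context: Let $\mathcal{I}=\{1,\dots,D\}$ and for each $i$ let $\mathcal{R}_i\subseteq\mathbb{R}^{d_i}$; for $A\subseteq\mathcal{I}$ write $\mathcal{R}_A=\prod_{i\in A}\mathcal{R}_i$ and $\mathbf{X}_A=(X_i)_{i\in A}$. ODE. An ODE $\mathcal{D}$ consists of: for each $i\in\mathcal{I}$ a parent set $\mathrm{pa}_{\mathcal{D}}(i)\subseteq\mathcal{I}$ (possibly containing $i$) and a locally Lipschitz continuous function $f_i:\mathcal{R}_{\mathrm{pa}_{\mathcal{D}}(i)}\to\mathcal{R}_i$ that depends nontrivially on each of its arguments; together with a set $C\subseteq\mathcal{I}$ of clamped indices and clamp values $\mathbf{c}_C\in\mathcal{R}_C$, such that for $i\in C$ we have $\mathrm{pa}_{\mathcal{D}}(i)=\emptyset$ and $f_i\equiv 0$. Its dynamics is $\dot X_i(t)=f_i(\mathbf{X}_{\mathrm{pa}_{\mathcal{D}}(i)}(t))$ for all $i$, with admissible initial states $\mathbf{X}(0)=\mathbf{X}_0\in\mathcal{R}_{\mathcal{I}}$ satisfying $(\mathbf{X}_0)_C=\mathbf{c}_C$. (The observational ODE has $C=\emptyset$.) Perfect intervention on an ODE. For $I\subseteq\mathcal{I}$ and $\boldsymbol{\xi}_I\in\mathcal{R}_I$, the intervened ODE $\mathcal{D}_{\mathrm{do}(\mathbf{X}_I=\boldsymbol{\xi}_I)}$ is obtained by setting, for each $i\in I$,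 $\mathrm{pa}(i):=\emptyset$ and $f_i:\equiv0$, and replacing the clamped set by $C\cup I$ with clamp values $\xi_i$ for $i\in I$ and $c_i$ for $i\in C\setminus I$; all other $f_j$ and parent sets are unchanged. Stability. For $\mathcal{J}\subseteq\mathcal{P}(\mathcal{I})$, $\mathcal{D}$ is stable with respect to $\mathcal{J}$ if for every $I\in\mathcal{J}$ and every $\boldsymbol{\xi}_I\in\mathcal{R}_I$ there exists a unique $\mathbf{X}^*_{\mathrm{do}(\mathbf{X}_I=\boldsymbol{\xi}_I)}\in\mathcal{R}_{\mathcal{I}}$ such that for every admissible initial state of $\mathcal{D}_{\mathrm{do}(\mathbf{X}_I=\boldsymbol{\xi}_I)}$ the solution exists for all $t\ge0$ and satisfies $\lim_{t\to\infty}\mathbf{X}(t)=\mathbf{X}^*_{\mathrm{do}(\mathbf{X}_I=\boldsymbol{\xi}_I)}$. $\mathcal{D}$ is structurally stable if for each $i\in\mathcal{I}$ there is $I_i$ with $\mathrm{pa}_{\mathcal{D}}(i)\setminus\{i\}\subseteq I_i\subseteq\mathcal{I}\setminus\{i\}$ such that $\mathcal{D}$ is stable with respect to $\{I_i\}$. LEE. A system of labeled equilibrium equations (LEE) $\mathcal{E}$ consists of, for each label $i\in\mathcal{I}$, a parent set $\mathrm{pa}_{\mathcal{E}}(i)\subseteq\mathcal{I}$ and a function $g_i:\mathcal{R}_{\mathrm{pa}_{\mathcal{E}}(i)}\to\mathcal{R}_i$, giving the labeled equation $\mathcal{E}_i:\ 0=g_i(\mathbf{X}_{\mathrm{pa}_{\mathcal{E}}(i)})$.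 Two LEEs are equal if they have the same parent sets and functions for every label. A solution is $\mathbf{X}\in\mathcal{R}_{\mathcal{I}}$ satisfying all equations; $\mathcal{E}$ is solvable if it has exactly one solution, and solvable with respect to $\mathcal{J}\subseteq\mathcal{P}(\mathcal{I})$ if $\mathcal{E}_{\mathrm{do}(\mathbf{X}_I=\boldsymbol{\xi}_I)}$ is solvable for all $I\in\mathcal{J}$, $\boldsymbol{\xi}_I\in\mathcal{R}_I$. The intervened LEE $\mathcal{E}_{\mathrm{do}(\mathbf{X}_I=\boldsymbol{\xi}_I)}$ replaces, for each $i\in I$, $\mathcal{E}_i$ by $0=X_i-\xi_i$ (parent set $\{i\}$), leaving the others unchanged. Induced LEE. The LEE $\mathcal{E}_{\mathcal{D}}$ induced by an ODE $\mathcal{D}$ with clamped set $C$ and values $\mathbf{c}_C$ has, for $i\notin C$, the labeled equation $0=f_i(\mathbf{X}_{\mathrm{pa}_{\mathcal{D}}(i)})$ with parent set $\mathrm{pa}_{\mathcal{D}}(i)$, and for $i\in C$ the labeled equation $0=X_i-c_i$ with parent set $\{i\}$. Deterministic SCM. An SCM $\mathcal{M}$ consists of, for each $i$, a parent set $\mathrm{pa}_{\mathcal{M}}(i)\subseteq\mathcal{I}\setminus\{i\}$ and a function $h_i:\mathcal{R}_{\mathrm{pa}_{\mathcal{M}}(i)}\to\mathcal{R}_i$, giving the structural equation $X_i=h_i(\mathbf{X}_{\mathrm{pa}_{\mathcal{M}}(i)})$. Two SCMs are equal if they have the same parent sets and functions. $\mathcal{M}_{\mathrm{do}(\mathbf{X}_I=\boldsymbol{\xi}_I)}$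 replaces, for each $i\in I$, the structural equation by $X_i=\xi_i$ (empty parent set). $\mathcal{M}$ is solvable if its structural equations have exactly one simultaneous solution. Induced SCM. For an LEE $\mathcal{E}$ and sets $I_i$ with $\mathrm{pa}_{\mathcal{E}}(i)\setminus\{i\}\subseteq I_i\subseteq\mathcal{I}\setminus\{i\}$ such that $\mathcal{E}$ is solvable with respect to $\{I_i\}$ (for the induced LEE of a structurally stable ODE one uses the sets $I_i$ witnessing structural stability), the induced SCM $\mathcal{M}_{\mathcal{E}}$ has $\mathrm{pa}_{\mathcal{M}_{\mathcal{E}}}(i):=\mathrm{pa}_{\mathcal{E}}(i)\setminus\{i\}$ and $h_i(\boldsymbol{\xi}_{\mathrm{pa}_{\mathcal{M}_{\mathcal{E}}}(i)}):=\big(\mathbf{X}^*_{\mathrm{do}(\mathbf{X}_{I_i}=\boldsymbol{\xi}_{I_i})}\big)_i$, the $i$-th component of the unique solution of $\mathcal{E}_{\mathrm{do}(\mathbf{X}_{I_i}=\boldsymbol{\xi}_{I_i})}$, where $\boldsymbol{\xi}_{I_i}$ is any extension of $\boldsymbol{\xi}_{\mathrm{pa}_{\mathcal{M}_{\mathcal{E}}}(i)}$ to $I_i$ (the construction presupposes that this component depends only on $\boldsymbol{\xi}_{\mathrm{pa}_{\mathcal{M}_{\mathcal{E}}}(i)}$). *)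

(* Defs.v *)
From Stdlib Require Import Reals Bool.
From Stdlib Require Vectors.Fin.
Open Scope R_scope.

Definition Vec (n : nat) := Fin.t n -> R.
Definition vzero {n} : Vec n := fun _ => 0.
Definition vsub {n} (x y : Vec n) : Vec n := fun k => x k - y k.

Section Defs.
(* D = number of variables, d i = dimension of X_i, Rs i = the set R_i ⊆ R^{d_i}. *)
Variable D : nat.
Variable d : Fin.t D -> nat.

Definition State := forall i : Fin.t D, Vec (d i).
Definition IdxSet := Fin.t D -> bool.
Definition emptyset : IdxSet := fun _ => false.
Definition singleton (i : Fin.t D) : IdxSet :=
  fun j => if Fin.eq_dec i j then true else false.
Definition remove (P : IdxSet) (i : Fin.t D) : IdxSet :=
  fun j => P j && negb (singleton i j).

(* ODE: parent sets pa(i) (j ∈ pa(i) iff ode_pa i j = true), functions f_i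
   (encoded on full states, required to depend only on the parents),
   clamped set C and clamp values c (only the values on C matter). *)
Record ODE := mkODE {
  ode_pa : Fin.t D -> IdxSet;
  ode_f : forall i : Fin.t D, State -> Vec (d i);
  ode_C : IdxSet;
  ode_c : State }.

Record LEE := mkLEE {
  lee_pa : Fin.t D -> IdxSet;
  lee_g : forall i : Fin.t D, State -> Vec (d i) }.

Record SCM := mkSCM {
  scm_pa : Fin.t D -> IdxSet;
  scm_h : forall i : Fin.t D, State -> Vec (d i) }.

Variable Rs : forall i : Fin.t D, Vec (d i) -> Prop.

Definition InR (X : State) : Prop := forall i, Rs i (X i).
Definition InR_on (I : IdxSet) (X : State) : Prop := forall i, I i = true -> Rs i (X i).

(* g : R_P -> R^n, encoded on full states: depends only on the P-components. *)
Definition depends_only (P : IdxSet) {n} (g : State -> Vec n) : Prop :=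
  forall x y, InR x -> InR y -> (forall j, P j = true -> x j = y j) -> g x = g y.

Definition depends_nontrivially (P : IdxSet) {n} (g : State -> Vec n) : Prop :=
  forall j, P j = true ->
    exists x y, InR x /\ InR y /\ (forall l, l <> j -> x l = y l) /\ g x <> g y.

Definition near (delta : R) (x y : State) : Prop :=
  forall j k, Rabs (y j k - x j k) < delta.

Definition loc_lipschitz {n} (g : State -> Vec n) : Prop :=
  forall x, InR x -> exists delta L, delta > 0 /\ L >= 0 /\
    forall y z, InR y -> InR z -> near delta x y -> near delta x z ->
      forall e, 0 <= e -> (forall j k, Rabs (y j k - z j k) <= e) ->
        forall k, Rabs (g y k - g z k) <= L * e.

Definition is_ODE (O : ODE) : Prop :=
  (forall i, depends_only (ode_pa O i) (ode_f O i) /\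
             depends_nontrivially (ode_pa O i) (ode_f O i) /\
             loc_lipschitz (ode_f O i)) /\
  (forall i, ode_C O i = true ->
     (forall j, ode_pa O i j = false) /\
     (forall x, InR x -> ode_f O i x = vzero)) /\
  InR_on (ode_C O) (ode_c O).

Definition observational (O : ODE) : Prop := forall i, ode_C O i = false.

(* Perfect intervention do(X_I = xi_I) on an ODE (only xi on I matters). *)
Definition ode_do (O : ODE) (I : IdxSet) (xi : State) : ODE :=
  mkODE (fun i => if I i then emptyset else ode_pa O i)
        (fun i x => if I i then vzero else ode_f O i x)
        (fun j => I j || ode_C O j)
        (fun j => if I j then xi j else ode_c O j).

Definition admissible (O : ODE) (X0 : State) : Prop :=
  InR X0 /\ forall i, ode_C O i = true -> X0 i = ode_c O i.

Definition ode_solution (O : ODE) (X0 : State) (X : R -> State) : Prop :=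
  X 0 = X0 /\
  (forall t, 0 <= t -> InR (X t)) /\
  (forall t, 0 < t -> forall i k,
      derivable_pt_lim (fun s => X s i k) t (ode_f O i (X t) k)) /\
  (forall i k eps, eps > 0 -> exists delta, delta > 0 /\
      forall t, 0 <= t < delta -> Rabs (X t i k - X0 i k) < eps).

Definition converges (X : R -> State) (Xs : State) : Prop :=
  forall eps, eps > 0 -> exists T, forall t, t >= T ->
    forall i k, Rabs (X t i k - Xs i k) < eps.

Definition attracts (O : ODE) (Xs : State) : Prop :=
  forall X0, admissible O X0 ->
    (exists X, ode_solution O X0 X) /\
    (forall X, ode_solution O X0 X -> converges X Xs).

(* Stability w.r.t. the singleton family {I}. *)
Definition stable_wrt (O : ODE) (I : IdxSet) : Prop :=
  forall xi, InR_on I xi -> exists! Xs, InR Xs /\ attracts (ode_do O I xi) Xs.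

Definition struct_stable_witness (O : ODE) (Ii : Fin.t D -> IdxSet) : Prop :=
  forall i, (forall j, ode_pa O i j = true -> j <> i -> Ii i j = true) /\
            Ii i i = false /\ stable_wrt O (Ii i).

Definition struct_stable (O : ODE) : Prop := exists Ii, struct_stable_witness O Ii.

Definition lee_solution (E : LEE) (X : State) : Prop :=
  InR X /\ forall i, lee_g E i X = vzero.
Definition lee_solvable (E : LEE) : Prop := exists! X, lee_solution E X.
Definition lee_do (E : LEE) (I : IdxSet) (xi : State) : LEE :=
  mkLEE (fun i => if I i then singleton i else lee_pa E i)
        (fun i X => if I i then vsub (X i) (xi i) else lee_g E i X).
Definition lee_solvable_wrt (E : LEE) (I : IdxSet) : Prop :=
  forall xi, InR_on I xi -> lee_solvable (lee_do E I xi).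
Definition lee_eq (E1 E2 : LEE) : Prop :=
  forall i, (forall j, lee_pa E1 i j = lee_pa E2 i j) /\
            (forall X, InR X -> lee_g E1 i X = lee_g E2 i X).

Definition lee_of_ode (O : ODE) : LEE :=
  mkLEE (fun i => if ode_C O i then singleton i else ode_pa O i)
        (fun i X => if ode_C O i then vsub (X i) (ode_c O i) else ode_f O i X).

Definition scm_solution (M : SCM) (X : State) : Prop :=
  InR X /\ forall i, X i = scm_h M i X.
Definition scm_do (M : SCM) (I : IdxSet) (xi : State) : SCM :=
  mkSCM (fun i => if I i then emptyset else scm_pa M i)
        (fun i X => if I i then xi i else scm_h M i X).
Definition scm_eq (M1 M2 : SCM) : Prop :=
  forall i, (forall j, scm_pa M1 i j = scm_pa M2 i j) /\
            (forall X, InR X -> scm_h M1 i X = scm_h M2 i X).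

Definition induced_SCM (E : LEE) (Ii : Fin.t D -> IdxSet) (M : SCM) : Prop :=
  (forall i, (forall j, lee_pa E i j = true -> j <> i -> Ii i j = true) /\
             Ii i i = false /\ lee_solvable_wrt E (Ii i)) /\
  (forall i j, scm_pa M i j = remove (lee_pa E i) i j) /\
  (forall i, depends_only (scm_pa M i) (scm_h M i)) /\
  (forall i xi X, InR xi -> lee_solution (lee_do E (Ii i) xi) X ->
                  scm_h M i xi = X i).

End Defs.

Arguments mkODE {D d}. Arguments ode_pa {D d}. Arguments ode_f {D d}.
Arguments ode_C {D d}. Arguments ode_c {D d}.
Arguments mkLEE {D d}. Arguments lee_pa {D d}. Arguments lee_g {D d}.
Arguments mkSCM {D d}. Arguments scm_pa {D d}. Arguments scm_h {D d}.
Arguments State {D}. Arguments emptyset {D}. Arguments singleton {D}. Arguments remove {D}.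
Arguments InR {D d}. Arguments InR_on {D d}. Arguments depends_only {D d}.
Arguments depends_nontrivially {D d}. Arguments near {D d}. Arguments loc_lipschitz {D d}.
Arguments is_ODE {D d}. Arguments observational {D d}. Arguments ode_do {D d}.
Arguments admissible {D d}. Arguments ode_solution {D d}. Arguments converges {D d}.
Arguments attracts {D d}. Arguments stable_wrt {D d}. Arguments struct_stable_witness {D d}.
Arguments struct_stable {D d}. Arguments lee_solution {D d}. Arguments lee_solvable {D d}.
Arguments lee_do {D d}. Arguments lee_solvable_wrt {D d}. Arguments lee_eq {D d}.
Arguments lee_of_ode {D d}. Arguments scm_solution {D d}. Arguments scm_do {D d}.
Arguments scm_eq {D d}. Arguments induced_SCM {D d}.

(* Main.v *)
Require Import Defs.
From Stdlib Require Import Reals Lra.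
From Stdlib Require Vectors.Fin.
From Stdlib Require Import FunctionalExtensionality Classical.
From Coquelicot Require Coquelicot.
Open Scope R_scope.

Lemma cont_of_lim (g : R -> R) t l : derivable_pt_lim g t l -> continuity_pt g t.
Proof. intro H. apply derivable_continuous_pt. exists l. exact H. Qed.

Lemma MVI (g dg : R -> R) a b M :
  a <= b -> (forall t, a < t <= b -> derivable_pt_lim g t (dg t)) ->
  (forall eps, eps > 0 -> exists delta, delta > 0 /\
       forall t, a <= t < a + delta -> Rabs (g t - g a) < eps) ->
  (forall t, a < t <= b -> Rabs (dg t) <= M) ->
  Rabs (g b - g a) <= M * (b - a).
Proof.
  intros Hab Hd Hc Hb.
  destruct (Req_dec a b) as [<-|Hne].
  { replace (g a - g a) with 0 by ring. rewrite Rabs_R0. lra. }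
  assert (Hlt : a < b) by lra.
  assert (HM : 0 <= M).
  { apply Rle_trans with (Rabs (dg b)); [apply Rabs_pos| apply Hb; lra]. }
  destruct (Rle_or_lt (Rabs (g b - g a)) (M * (b - a))) as [H|H]; [exact H|].
  exfalso.
  set (gap := Rabs (g b - g a) - M * (b - a)).
  assert (Hgap : gap > 0) by (unfold gap; lra).
  destruct (Hc (gap/2)) as [delta [Hdel Hdc]]; [lra|].
  set (a' := a + Rmin (delta/2) (Rmin ((b-a)/2) (gap / (2 * (M+1))))).
  assert (Hm1 : Rmin (delta/2) (Rmin ((b-a)/2) (gap / (2 * (M+1)))) <= delta/2) by apply Rmin_l.
  assert (Hm2 : Rmin (delta/2) (Rmin ((b-a)/2) (gap / (2 * (M+1)))) <= (b-a)/2).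
  { eapply Rle_trans; [apply Rmin_r| apply Rmin_l]. }
  assert (Hm3 : Rmin (delta/2) (Rmin ((b-a)/2) (gap / (2 * (M+1)))) <= gap / (2 * (M+1))).
  { eapply Rle_trans; [apply Rmin_r| apply Rmin_r]. }
  assert (Hm0 : 0 < Rmin (delta/2) (Rmin ((b-a)/2) (gap / (2 * (M+1))))).
  { apply Rmin_pos; [lra|apply Rmin_pos; [lra|]]. apply Rdiv_lt_0_compat; lra. }
  assert (Ha'1 : a < a') by (unfold a'; lra).
  assert (Ha'2 : a' < b) by (unfold a'; lra).
  assert (Hga' : Rabs (g a' - g a) < gap/2) by (apply Hdc; unfold a'; lra).
  assert (HMa : M * (a' - a) <= gap / 2).
  { assert (M * (a' - a) <= M * (gap / (2 * (M+1)))).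
    { apply Rmult_le_compat_l; [lra| unfold a'; lra]. }
    assert (M * (gap / (2 * (M+1))) <= gap/2).
    { assert (Hq : M / (M+1) <= 1).
      { apply Rmult_le_reg_r with (M+1); [lra|].
        unfold Rdiv. rewrite Rmult_assoc, Rinv_l; lra. }
      replace (M * (gap / (2 * (M+1)))) with ((gap/2) * (M / (M+1))) by (field; lra).
      nra. }
    lra. }
  destruct (Coquelicot.Derive.MVT_gen g a' b dg) as [c [Hc1 Hc2]].
  - intros x Hx. rewrite Rmin_left in Hx by lra. rewrite Rmax_right in Hx by lra.
    apply Coquelicot.Derive.is_derive_Reals. apply Hd. lra.
  - intros x Hx. rewrite Rmin_left in Hx by lra. rewrite Rmax_right in Hx by lra.
    apply cont_of_lim with (dg x). apply Hd. lra.
  - rewrite Rmin_left in Hc1 by lra. rewrite Rmax_right in Hc1 by lra.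
    assert (Rabs (g b - g a') <= M * (b - a')).
    { rewrite Hc2, Rabs_mult, (Rabs_right (b - a')) by lra.
      apply Rmult_le_compat_r; [lra|]. apply Hb. lra. }
    assert (Rabs (g b - g a) <= Rabs (g b - g a') + Rabs (g a' - g a)).
    { replace (g b - g a) with ((g b - g a') + (g a' - g a)) by ring. apply Rabs_triang. }
    assert (M * (b - a') = M * (b - a) - M * (a' - a)) by ring.
    assert (M * (a' - a) >= 0) by (apply Rle_ge, Rmult_le_pos; lra).
    unfold gap in *. lra.
Qed.

Lemma cont_eps f x eps : continuity_pt f x -> eps > 0 ->
  exists alp, alp > 0 /\ forall y, Rabs (y - x) < alp -> Rabs (f y - f x) < eps.
Proof.
  intros Hc He. destruct (Hc eps He) as [alp [Ha H]].
  exists alp. split; [exact Ha|]. intros y Hy.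
  destruct (Req_dec x y) as [<-|Hne].
  - replace (f x - f x) with 0 by ring. rewrite Rabs_R0. lra.
  - apply (H y). split; [split; [exact I| exact Hne]|]. exact Hy.
Qed.

Lemma small_eq a b : (forall eps, eps > 0 -> Rabs (a - b) < eps) -> a = b.
Proof.
  intro H. destruct (Req_dec a b) as [E|Hne]; [exact E|].
  exfalso. assert (Hp : Rabs (a - b) > 0) by (apply Rabs_pos_lt; lra).
  specialize (H _ Hp). lra.
Qed.

Lemma fin_min n (P : Fin.t n -> R -> Prop) :
  (forall k d1 d2, 0 < d2 <= d1 -> P k d1 -> P k d2) ->
  (forall k, exists dd, dd > 0 /\ P k dd) -> exists dd, dd > 0 /\ forall k, P k dd.
Proof.
  induction n as [|n IH]; intros Hm Hex.
  - exists 1. split; [lra|]. intro k. apply (Fin.case0 (fun k => P k 1) k).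
  - destruct (IH (fun k => P (Fin.FS k))) as [d1 [Hd1 H1]].
    + intros k a b Hab Hk. exact (Hm _ a b Hab Hk).
    + intro k. exact (Hex (Fin.FS k)).
    + destruct (Hex Fin.F1) as [d0 [Hd0 H0]].
      exists (Rmin d0 d1). split; [apply Rmin_pos; lra|].
      intro k. apply (Fin.caseS' k).
      * apply Hm with d0; [split; [apply Rmin_pos; lra| apply Rmin_l]| exact H0].
      * intro k'. apply Hm with d1; [split; [apply Rmin_pos; lra| apply Rmin_r]| exact (H1 k')].
Qed.

Section Main.
Variable D : nat.
Variable d : Fin.t D -> nat.
Variable Rs : forall i : Fin.t D, Vec (d i) -> Prop.

Lemma vec_ext {n} (x y : Vec n) : (forall k, x k = y k) -> x = y.
Proof. intro H. apply functional_extensionality. exact H. Qed.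

Lemma state_ext (x y : State d) : (forall j, x j = y j) -> x = y.
Proof. intro H. apply functional_extensionality_dep. exact H. Qed.

Lemma sing_ii (i : Fin.t D) : singleton i i = true.
Proof. unfold singleton. destruct (Fin.eq_dec i i); congruence. Qed.

Lemma sing_ne (i j : Fin.t D) : i <> j -> singleton i j = false.
Proof. intro H. unfold singleton. destruct (Fin.eq_dec i j); congruence. Qed.

Lemma sol_rcont (O : ODE D d) X0 X : ode_solution Rs O X0 X ->
  forall t, 0 <= t -> forall j k eps, eps > 0 -> exists delta, delta > 0 /\
    forall s, t <= s < t + delta -> Rabs (X s j k - X t j k) < eps.
Proof.
  intros [H0 [_ [Hd Hc]]] t Ht j k eps He.
  destruct (Req_dec t 0) as [->|Hne].
  - rewrite H0. destruct (Hc j k eps He) as [delta [Hdl H]].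
    exists delta. split; [exact Hdl|]. intros s Hs. apply H. lra.
  - assert (Hcont : continuity_pt (fun s => X s j k) t).
    { apply cont_of_lim with (ode_f O j (X t) k). apply Hd. lra. }
    destruct (cont_eps _ _ eps Hcont He) as [alp [Ha H]].
    exists alp. split; [exact Ha|]. intros s Hs. apply H.
    rewrite Rabs_right; lra.
Qed.

Lemma conv_const (Y Xs : State d) : converges (fun _ => Y) Xs -> Y = Xs.
Proof.
  intro H. apply state_ext. intro j. apply vec_ext. intro k.
  apply small_eq. intros eps He. destruct (H eps He) as [T HT].
  apply (HT T). lra.
Qed.

Lemma conv_comp (X : R -> State d) Xs j k c :
  converges X Xs -> (forall t, 0 <= t -> X t j k = c) -> c = Xs j k.
Proof.
  intros H Hc. apply small_eq. intros eps He. destruct (H eps He) as [T HT].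
  rewrite <- (Hc (Rmax T 0)) by apply Rmax_r. apply HT. apply Rle_ge, Rmax_l.
Qed.

Lemma const_sol (O : ODE D d) X : InR Rs X -> (forall i, ode_f O i X = vzero) ->
  ode_solution Rs O X (fun _ => X).
Proof.
  intros HX Hf. split; [reflexivity|]. split; [intros; exact HX|]. split.
  - intros t Ht i k. rewrite Hf. unfold vzero. apply derivable_pt_lim_const.
  - intros i k eps He. exists 1. split; [lra|]. intros t Ht.
    replace (X i k - X i k) with 0 by ring. rewrite Rabs_R0. lra.
Qed.

Lemma clamped_const (O : ODE D d) K xi' X0 X j :
  ode_solution Rs (ode_do O K xi') X0 X -> K j = true ->
  forall t, 0 <= t -> X t j = X0 j.
Proof.
  intros Hs HK t Ht. apply vec_ext. intro k.
  pose proof Hs as [H0 [_ [Hd _]]].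
  assert (Habs : Rabs (X t j k - X 0 j k) <= 0 * (t - 0)).
  { apply (MVI (fun s => X s j k) (fun s => ode_f (ode_do O K xi') j (X s) k)).
    - exact Ht.
    - intros s Hs'. apply Hd. lra.
    - intros eps He. destruct (sol_rcont _ _ _ Hs 0 (Rle_refl 0) j k eps He) as [dl [Hdl Hh]].
      exists dl. split; [exact Hdl|]. exact Hh.
    - intros s _. simpl. rewrite HK. unfold vzero. rewrite Rabs_R0. lra. }
  rewrite H0 in Habs.
  apply small_eq. intros eps He. lra.
Qed.


Lemma abs_sub_le a b : Rabs (a - b) <= Rabs a + Rabs b.
Proof. unfold Rminus. rewrite <- (Rabs_Ropp b). apply Rabs_triang. Qed.

Lemma limit_equil (O : ODE D d) X0 X Xs j :
  ode_solution Rs O X0 X -> converges X Xs -> InR Rs Xs ->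
  loc_lipschitz Rs _ (ode_f O j) -> ode_f O j Xs = vzero.
Proof.
  intros Hs Hcv HXs Hlip. apply vec_ext. intro k. unfold vzero.
  set (c := ode_f O j Xs k).
  destruct (Req_dec c 0) as [E|Hc]; [exact E|]. exfalso.
  pose proof Hs as [H0 [HR [Hd _]]].
  assert (Hac : Rabs c > 0) by (apply Rabs_pos_lt; exact Hc).
  destruct (Hlip Xs HXs) as [delta [L [Hdl [HL Hl]]]].
  set (eps := Rmin 1 (Rmin delta (Rabs c / (2 * (L + 1))))).
  assert (He1 : eps <= 1) by apply Rmin_l.
  assert (He2 : eps <= delta) by (eapply Rle_trans; [apply Rmin_r|apply Rmin_l]).
  assert (He3 : eps <= Rabs c / (2 * (L + 1))) by (eapply Rle_trans; [apply Rmin_r|apply Rmin_r]).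
  assert (He0 : eps > 0).
  { apply Rmin_pos; [lra| apply Rmin_pos; [lra|]]. apply Rdiv_lt_0_compat; lra. }
  destruct (Hcv eps He0) as [T HT].
  set (t1 := Rmax T 1). set (t2 := t1 + 4 / Rabs c).
  assert (Ht1 : t1 >= T /\ t1 >= 1) by (unfold t1; split; apply Rle_ge; [apply Rmax_l|apply Rmax_r]).
  assert (Hq : 4 / Rabs c > 0) by (apply Rdiv_lt_0_compat; lra).
  assert (Ht2 : t2 > t1) by (unfold t2; lra).
  destruct (Coquelicot.Derive.MVT_gen (fun s => X s j k) t1 t2 (fun s => ode_f O j (X s) k))
    as [c' [Hc1 Hc2]].
  - intros x Hx. rewrite Rmin_left in Hx by lra. rewrite Rmax_right in Hx by lra.
    apply Coquelicot.Derive.is_derive_Reals. apply Hd. lra.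
  - intros x Hx. rewrite Rmin_left in Hx by lra. rewrite Rmax_right in Hx by lra.
    apply cont_of_lim with (ode_f O j (X x) k). apply Hd. lra.
  - rewrite Rmin_left in Hc1 by lra. rewrite Rmax_right in Hc1 by lra.
    assert (Hnear : forall j' k', Rabs (X c' j' k' - Xs j' k') < eps).
    { apply HT. lra. }
    assert (Hb : Rabs (ode_f O j (X c') k - ode_f O j Xs k) <= L * eps).
    { apply Hl.
      - apply HR. lra.
      - exact HXs.
      - intros j' k'. specialize (Hnear j' k'). lra.
      - intros j' k'. replace (Xs j' k' - Xs j' k') with 0 by ring. rewrite Rabs_R0. lra.
      - lra.
      - intros j' k'. specialize (Hnear j' k'). lra. }
    assert (HLe : L * eps < Rabs c / 2).
    { assert (L * eps <= L * (Rabs c / (2 * (L + 1)))) by (apply Rmult_le_compat_l; lra).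
      assert (L * (Rabs c / (2 * (L + 1))) < Rabs c / 2).
      { replace (L * (Rabs c / (2 * (L + 1)))) with ((Rabs c / 2) * (L / (L+1))) by (field; lra).
        assert (L / (L+1) < 1).
        { apply Rmult_lt_reg_r with (L+1); [lra|].
          unfold Rdiv. rewrite Rmult_assoc, Rinv_l; lra. }
        nra. }
      lra. }
    fold c in Hb.
    assert (Hdf : Rabs (ode_f O j (X c') k) > Rabs c / 2).
    { assert (Rabs c <= Rabs (ode_f O j (X c') k) + Rabs (ode_f O j (X c') k - c)).
      { replace c with (ode_f O j (X c') k - (ode_f O j (X c') k - c)) at 1 by ring.
        apply abs_sub_le. }
      lra. }
    assert (Hdiff : Rabs (X t2 j k - X t1 j k) > 2).
    { rewrite Hc2, Rabs_mult, (Rabs_right (t2 - t1)) by lra.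
      replace (t2 - t1) with (4 / Rabs c) by (unfold t2; ring).
      assert (Rabs (ode_f O j (X c') k) * (4 / Rabs c) > (Rabs c / 2) * (4 / Rabs c)).
      { apply Rmult_gt_compat_r; lra. }
      replace (Rabs c / 2 * (4 / Rabs c)) with 2 in H by (field; lra). lra. }
    assert (A1 : Rabs (X t1 j k - Xs j k) < eps) by (apply HT; lra).
    assert (A2 : Rabs (X t2 j k - Xs j k) < eps) by (apply HT; lra).
    assert (Rabs (X t2 j k - X t1 j k) <= Rabs (X t2 j k - Xs j k) + Rabs (X t1 j k - Xs j k)).
    { replace (X t2 j k - X t1 j k) with ((X t2 j k - Xs j k) - (X t1 j k - Xs j k)) by ring.
      apply abs_sub_le. }
    lra.
Qed.


Lemma comp_const (O : ODE D d) K xi' X0 X i :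
  is_ODE Rs O -> InR Rs X0 ->
  ode_solution Rs (ode_do O K xi') X0 X -> K i = false ->
  (forall j, ode_pa O i j = true -> j <> i -> K j = true) ->
  ode_f O i X0 = vzero ->
  forall t, 0 <= t -> X t i = X0 i.
Proof.
  intros HO HX0 Hs HKi HK Hf0.
  destruct HO as [HOi _]. destruct (HOi i) as [Hdep [_ Hlip]].
  pose proof Hs as [H0 [HR [Hd _]]].
  pose (Z := fun s : R => (fun j => if singleton i j then X s j else X0 j) : State d).
  assert (HZR : forall s, 0 <= s -> InR Rs (Z s)).
  { intros s Hs0 j. unfold Z. destruct (singleton i j); [apply HR; exact Hs0| apply HX0]. }
  assert (HZf : forall s, 0 <= s -> ode_f O i (X s) = ode_f O i (Z s)).
  { intros s Hs0. apply Hdep; [apply HR; exact Hs0| apply HZR; exact Hs0|].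
    intros j Hj. unfold Z. destruct (Fin.eq_dec i j) as [<-|Hne].
    - rewrite sing_ii. reflexivity.
    - rewrite (sing_ne _ _ Hne). apply (clamped_const O K xi' X0 X j Hs); [|exact Hs0].
      apply HK; [exact Hj| congruence]. }
  assert (Hderiv : forall s, 0 < s -> forall k,
             derivable_pt_lim (fun r => X r i k) s (ode_f O i (Z s) k)).
  { intros s Hs0 k. rewrite <- HZf by lra. pose proof (Hd s Hs0 i k) as Hk.
    simpl in Hk. rewrite HKi in Hk. exact Hk. }
  destruct (Hlip X0 HX0) as [delta [L [Hdl [HL Hl]]]].
  assert (Hkey : forall s, 0 <= s -> forall e, 0 <= e ->
            (forall k, Rabs (X s i k - X0 i k) < delta) ->
            (forall k, Rabs (X s i k - X0 i k) <= e) ->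
            forall k, Rabs (ode_f O i (Z s) k) <= L * e).
  { intros s Hs0 e He Hc Hb k.
    replace (ode_f O i (Z s) k) with (ode_f O i (Z s) k - ode_f O i X0 k)
      by (rewrite Hf0; unfold vzero; ring).
    apply Hl; [apply HZR; exact Hs0| exact HX0| | | exact He|].
    - intros j k'. unfold Z. destruct (Fin.eq_dec i j) as [<-|Hne].
      + rewrite sing_ii. apply Hc.
      + rewrite (sing_ne _ _ Hne). replace (X0 j k' - X0 j k') with 0 by ring.
        rewrite Rabs_R0. lra.
    - intros j k'. replace (X0 j k' - X0 j k') with 0 by ring. rewrite Rabs_R0. lra.
    - intros j k'. unfold Z. destruct (Fin.eq_dec i j) as [<-|Hne].
      + rewrite sing_ii. apply Hb.
      + rewrite (sing_ne _ _ Hne). replace (X0 j k' - X0 j k') with 0 by ring.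
        rewrite Rabs_R0. lra. }
  assert (Hstep : forall T, 0 <= T -> (forall s, 0 <= s <= T -> X s i = X0 i) ->
            exists h, h > 0 /\ forall s, 0 <= s <= T + h -> X s i = X0 i).
  { intros T HT HTs.
    assert (XT : X T i = X0 i) by (apply HTs; lra).
    destruct (fin_min (d i) (fun k dd => forall s, T <= s < T + dd ->
                   Rabs (X s i k - X T i k) < delta)) as [dd [Hdd Hclose]].
    { intros k a b Hab Hk s Hs'. apply Hk. lra. }
    { intro k. exact (sol_rcont _ _ _ Hs T HT i k delta Hdl). }
    set (h := Rmin (dd/2) (1 / (2 * (L+1)))).
    assert (Hh1 : h <= dd/2) by apply Rmin_l.
    assert (Hh2 : h <= 1 / (2 * (L+1))) by apply Rmin_r.
    assert (Hh0 : h > 0).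
    { apply Rmin_pos; [lra|]. apply Rdiv_lt_0_compat; lra. }
    assert (HLh0 : 0 <= L * h) by (apply Rmult_le_pos; lra).
    assert (HLh1 : L * h < 1).
    { assert (L * h <= L * (1 / (2 * (L+1)))) by (apply Rmult_le_compat_l; lra).
      assert (L * (1 / (2 * (L+1))) < 1).
      { replace (L * (1 / (2 * (L+1)))) with (L / (2 * (L+1))) by (field; lra).
        apply Rmult_lt_reg_r with (2 * (L+1)); [lra|].
        unfold Rdiv. rewrite Rmult_assoc, Rinv_l; lra. }
      lra. }
    assert (Hcl : forall s, T <= s <= T + h -> forall k, Rabs (X s i k - X0 i k) < delta).
    { intros s Hs' k. rewrite <- XT. apply Hclose. lra. }
    assert (Hbnd : forall n s, T <= s <= T + h -> forall k,
               Rabs (X s i k - X0 i k) <= delta * (L * h) ^ n).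
    { induction n as [|n IHn]; intros s Hs' k.
      - simpl. rewrite Rmult_1_r. left. apply Hcl. exact Hs'.
      - assert (HP : 0 <= (L * h) ^ n) by (apply pow_le; exact HLh0).
        assert (HM := MVI (fun r => X r i k) (fun r => ode_f O i (Z r) k) T s
                          (L * (delta * (L * h) ^ n))).
        cbv beta in HM. rewrite XT in HM.
        assert (Hle : Rabs (X s i k - X0 i k) <= L * (delta * (L * h) ^ n) * (s - T)).
        { apply HM.
          - lra.
          - intros r Hr. apply Hderiv. lra.
          - intros eps He. destruct (sol_rcont _ _ _ Hs T HT i k eps He) as [dl [Hdl' Hh]].
            exists dl. split; [exact Hdl'|]. intros r Hr. rewrite <- XT. apply Hh. exact Hr.
          - intros r Hr. apply Hkey; [lra| apply Rmult_le_pos; lra| |].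
            + apply Hcl. lra.
            + intro k'. apply IHn. lra. }
        assert (0 <= L * (delta * (L * h) ^ n)) by (apply Rmult_le_pos; [lra| apply Rmult_le_pos; lra]).
        apply Rle_trans with (L * (delta * (L * h) ^ n) * h).
        + apply Rle_trans with (1 := Hle). apply Rmult_le_compat_l; lra.
        + simpl. right. ring. }
    assert (Hzero : forall s, T <= s <= T + h -> X s i = X0 i).
    { intros s Hs'. apply vec_ext. intro k.
      destruct (Req_dec (X s i k) (X0 i k)) as [E|Hne]; [exact E|]. exfalso.
      assert (Ha : Rabs (X s i k - X0 i k) > 0) by (apply Rabs_pos_lt; lra).
      destruct (pow_lt_1_zero (L * h) ltac:(rewrite Rabs_right; lra)
                  (Rabs (X s i k - X0 i k) / delta) ltac:(apply Rdiv_lt_0_compat; lra))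
        as [N HN].
      specialize (HN N (le_n N)).
      rewrite Rabs_right in HN by (apply Rle_ge, pow_le; exact HLh0).
      specialize (Hbnd N s Hs' k).
      assert (delta * (L * h) ^ N < delta * (Rabs (X s i k - X0 i k) / delta))
        by (apply Rmult_lt_compat_l; lra).
      replace (delta * (Rabs (X s i k - X0 i k) / delta)) with (Rabs (X s i k - X0 i k))
        in H by (field; lra).
      lra. }
    exists h. split; [exact Hh0|]. intros s Hs'.
    destruct (Rle_or_lt s T); [apply HTs; lra| apply Hzero; lra]. }
  intros t Ht.
  destruct (classic (forall s, 0 <= s <= t -> X s i = X0 i)) as [Hall|Hnot].
  { apply Hall. lra. }
  exfalso.
  pose (E := fun T => 0 <= T /\ forall s, 0 <= s <= T -> X s i = X0 i).
  assert (HE0 : E 0).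
  { split; [lra|]. intros s Hs'. replace s with 0 by lra. rewrite H0. reflexivity. }
  assert (Hbd : bound E).
  { exists t. intros T [HT HTs]. destruct (Rle_or_lt T t) as [Hle|Hlt]; [exact Hle|].
    exfalso. apply Hnot. intros s Hs'. apply HTs. lra. }
  destruct (completeness E Hbd (ex_intro _ 0 HE0)) as [m [Hub Hleast]].
  assert (Hm0 : 0 <= m) by (apply Hub; exact HE0).
  assert (Hlt : forall s, 0 <= s < m -> X s i = X0 i).
  { intros s Hs'.
    destruct (classic (exists T, E T /\ s <= T)) as [[T [[_ HT] HsT]]|Hno].
    - apply HT. lra.
    - exfalso. assert (Hsub : is_upper_bound E s).
      { intros x Hx. destruct (Rle_or_lt x s) as [Hle|Hgt]; [exact Hle|].
        exfalso. apply Hno. exists x. split; [exact Hx| lra]. }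
      specialize (Hleast s Hsub). lra. }
  assert (HEm : E m).
  { split; [exact Hm0|]. intros s Hs'.
    destruct (Rle_lt_or_eq_dec s m) as [Hsm|Hsm]; [lra| apply Hlt; lra|].
    subst s. destruct (Req_dec m 0) as [Hz|Hnz].
    { rewrite Hz, H0. reflexivity. }
    apply vec_ext. intro k.
    assert (Hc : continuity_pt (fun r => X r i k) m)
      by (apply cont_of_lim with (ode_f O i (Z m) k); apply Hderiv; lra).
    apply small_eq. intros eps He.
    destruct (cont_eps _ _ eps Hc He) as [alp [Ha Hal]].
    set (s' := Rmax 0 (m - alp / 2)).
    assert (Hs1 : 0 <= s') by apply Rmax_l.
    assert (Hs2 : m - alp/2 <= s') by apply Rmax_r.
    assert (Hs3 : s' < m) by (unfold s'; apply Rmax_lub_lt; lra).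
    assert (Hv : X s' i k = X0 i k) by (rewrite Hlt; [reflexivity| lra]).
    assert (Hd' : Rabs (X s' i k - X m i k) < eps).
    { apply (Hal s'). rewrite Rabs_left; lra. }
    rewrite Hv in Hd'. rewrite Rabs_minus_sym. exact Hd'. }
  destruct HEm as [_ HEm'].
  destruct (Hstep m Hm0 HEm') as [h [Hh Hh']].
  assert (HEmh : E (m + h)) by (split; [lra| exact Hh']).
  specialize (Hub _ HEmh). lra.
Qed.

Lemma vsub_zero {n} (a b : Vec n) : vsub a b = vzero -> a = b.
Proof.
  intro H. apply vec_ext. intro k.
  assert (Hk : vsub a b k = vzero k) by (rewrite H; reflexivity).
  unfold vsub, vzero in Hk. lra.
Qed.

Lemma eq_do_in E K c X l : lee_solution Rs (lee_do E K c) X -> K l = true -> X l = c l.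
Proof.
  intros [_ H] Hl. specialize (H l). simpl in H. rewrite Hl in H. apply vsub_zero. exact H.
Qed.

Lemma eq_do_out E K c X l : lee_solution Rs (lee_do E K c) X -> K l = false -> lee_g E l X = vzero.
Proof. intros [_ H] Hl. specialize (H l). simpl in H. rewrite Hl in H. exact H. Qed.

Lemma g_do_in (O : ODE D d) I xi X l : I l = true ->
  lee_g (lee_of_ode (ode_do O I xi)) l X = vsub (X l) (xi l).
Proof. intro H. simpl. rewrite H. reflexivity. Qed.

Lemma g_do_out (O : ODE D d) I xi X l : observational O -> I l = false ->
  lee_g (lee_of_ode (ode_do O I xi)) l X = ode_f O l X.
Proof. intros Ho H. simpl. rewrite H, (Ho l). reflexivity. Qed.

Lemma g_obs (O : ODE D d) X l : observational O -> lee_g (lee_of_ode O) l X = ode_f O l X.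
Proof. intros Ho. simpl. rewrite (Ho l). reflexivity. Qed.

Lemma pa_do_out (O : ODE D d) I xi l : observational O -> I l = false ->
  lee_pa (lee_of_ode (ode_do O I xi)) l = ode_pa O l.
Proof. intros Ho H. simpl. rewrite H, (Ho l). reflexivity. Qed.

Lemma pa_obs (O : ODE D d) l : observational O -> lee_pa (lee_of_ode O) l = ode_pa O l.
Proof. intros Ho. simpl. rewrite (Ho l). reflexivity. Qed.

Lemma root_unique (O : ODE D d) K i Y W :
  is_ODE Rs O -> observational O -> stable_wrt Rs O K -> K i = false ->
  (forall j, ode_pa O i j = true -> j <> i -> K j = true) ->
  InR Rs Y -> (forall j, K j = false -> ode_f O j Y = vzero) ->
  InR Rs W -> ode_f O i W = vzero ->
  (forall j, ode_pa O i j = true -> j <> i -> W j = Y j) ->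
  W i = Y i.
Proof.
  intros HO Hobs Hst HKi HK HY HYf HW HWf HWY.
  destruct (Hst Y (fun j _ => HY j)) as [Xs [[HXs Hatt] _]].
  assert (Heq : forall j, ode_f (ode_do O K Y) j Y = vzero).
  { intro j. simpl. destruct (K j) eqn:E; [reflexivity| apply HYf; exact E]. }
  assert (Hadm : admissible Rs (ode_do O K Y) Y).
  { split; [exact HY|]. intros j Hj. simpl in *. rewrite (Hobs j) in Hj.
    destruct (K j); [reflexivity| discriminate]. }
  destruct (Hatt Y Hadm) as [_ Hc].
  pose proof (conv_const _ _ (Hc _ (const_sol _ _ HY Heq))) as HYXs.
  subst Xs.
  pose (X0 := (fun j => if singleton i j then W j else Y j) : State d).
  assert (HX0R : InR Rs X0).
  { intro j. unfold X0. destruct (singleton i j); [apply HW| apply HY]. }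
  assert (HX0i : X0 i = W i) by (unfold X0; rewrite sing_ii; reflexivity).
  assert (Hadm0 : admissible Rs (ode_do O K Y) X0).
  { split; [exact HX0R|]. intros j Hj. simpl in *. rewrite (Hobs j) in Hj.
    destruct (K j) eqn:E; [|discriminate].
    unfold X0. rewrite sing_ne; [reflexivity|]. intro Hij. subst j. congruence. }
  assert (Hf0 : ode_f O i X0 = vzero).
  { rewrite <- HWf. destruct HO as [HOi _]. destruct (HOi i) as [Hdep _].
    apply Hdep; [exact HX0R| exact HW|]. intros j Hj. unfold X0.
    destruct (Fin.eq_dec i j) as [<-|Hne].
    - rewrite sing_ii. reflexivity.
    - rewrite (sing_ne _ _ Hne). symmetry. apply HWY; [exact Hj| congruence]. }
  destruct (Hatt X0 Hadm0) as [[Xt Hsol] Hc0].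
  pose proof (comp_const O K Y X0 Xt i HO HX0R Hsol HKi HK Hf0) as Hcc.
  apply vec_ext. intro k. rewrite <- HX0i.
  apply (conv_comp Xt Y i k (X0 i k) (Hc0 Xt Hsol)).
  intros t Ht. rewrite Hcc by exact Ht. reflexivity.
Qed.
End Main.
Arguments sol_rcont {D d Rs}. Arguments const_sol {D d Rs}. Arguments clamped_const {D d Rs}.
Arguments limit_equil {D d Rs}. Arguments comp_const {D d Rs}. Arguments eq_do_in {D d Rs}.
Arguments eq_do_out {D d Rs}. Arguments root_unique {D d Rs}.
Arguments state_ext {D d}. Arguments sing_ii {D}. Arguments sing_ne {D}.
Arguments conv_const {D d}. Arguments conv_comp {D d}. Arguments g_do_in {D d}.
Arguments g_do_out {D d}. Arguments g_obs {D d}. Arguments pa_do_out {D d}. Arguments pa_obs {D d}.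

Theorem theorem2 (D : nat) (d : Fin.t D -> nat)
  (Rs : forall i : Fin.t D, Vec (d i) -> Prop)
  (O : ODE D d) (I : IdxSet D) (xi : State d)
  (Ii Ji : Fin.t D -> IdxSet D) (M Mdo : SCM D d) :
  is_ODE Rs O -> observational O -> InR_on Rs I xi ->
  struct_stable_witness Rs O Ii ->
  struct_stable_witness Rs (ode_do O I xi) Ji ->
  induced_SCM Rs (lee_of_ode O) Ii M ->
  induced_SCM Rs (lee_of_ode (ode_do O I xi)) Ji Mdo ->
  (lee_eq Rs (lee_do (lee_of_ode O) I xi) (lee_of_ode (ode_do O I xi)) /\
   scm_eq Rs (scm_do M I xi) Mdo) /\
  (stable_wrt Rs O I ->
   exists Xs, (forall X, scm_solution Rs Mdo X <-> X = Xs) /\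
              InR Rs Xs /\ attracts Rs (ode_do O I xi) Xs).
Proof.
  intros HO Hobs Hxi HIi HJi HM HMdo.
  destruct HM as [HM1 [HM2 [HM3 HM4]]].
  destruct HMdo as [HD1 [HD2 [HD3 HD4]]].
  assert (HV : forall i X, InR Rs X -> exists V,
             lee_solution Rs (lee_do (lee_of_ode (ode_do O I xi)) (Ji i) X) V /\
             scm_h Mdo i X = V i).
  { intros i X HX. destruct (HD1 i) as [_ [_ Hsolv]].
    destruct (Hsolv X (fun j _ => HX j)) as [V [HVs _]].
    exists V. split; [exact HVs| apply HD4; assumption]. }
  assert (HVin : forall i X V, I i = true ->
             lee_solution Rs (lee_do (lee_of_ode (ode_do O I xi)) (Ji i) X) V -> V i = xi i).
  { intros i X V HIi' HVs. destruct (HD1 i) as [_ [HJii _]].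
    pose proof (eq_do_out _ _ _ _ i HVs HJii) as H.
    rewrite (g_do_in O I xi V i HIi') in H. apply vsub_zero. exact H. }
  assert (HVout : forall i X V, I i = false ->
             lee_solution Rs (lee_do (lee_of_ode (ode_do O I xi)) (Ji i) X) V ->
             ode_f O i V = vzero).
  { intros i X V HIi' HVs. destruct (HD1 i) as [_ [HJii _]].
    pose proof (eq_do_out _ _ _ _ i HVs HJii) as H.
    rewrite (g_do_out O I xi V i Hobs HIi') in H. exact H. }
  assert (HVpa : forall i X V j, I i = false ->
             lee_solution Rs (lee_do (lee_of_ode (ode_do O I xi)) (Ji i) X) V ->
             ode_pa O i j = true -> j <> i -> V j = X j).
  { intros i X V j HIi' HVs Hj Hji. destruct (HD1 i) as [Hpa _].
    apply (eq_do_in _ (Ji i) X V j HVs). apply Hpa; [|exact Hji].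
    rewrite (pa_do_out O I xi i Hobs HIi'). exact Hj. }
  split; [split|].
  - intro i. split.
    + intro j. simpl. rewrite (Hobs i). destruct (I i); reflexivity.
    + intros X _. simpl. rewrite (Hobs i). destruct (I i); reflexivity.
  - intro i. split.
    + intro j. simpl. rewrite HD2. unfold remove. simpl. rewrite (Hobs i).
      destruct (I i) eqn:E; simpl.
      * destruct (singleton i j); reflexivity.
      * rewrite HM2. unfold remove. simpl. rewrite (Hobs i). reflexivity.
    + intros X HX. simpl. destruct (HV i X HX) as [V [HVs HhV]]. rewrite HhV.
      destruct (I i) eqn:E.
      * symmetry. apply (HVin i X V E HVs).
      * destruct (HM1 i) as [HIpa [HIii Hsolv]].
        destruct (Hsolv X (fun j _ => HX j)) as [Y [HYs _]].
        rewrite (HM4 i X Y HX HYs). symmetry.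
        destruct (HIi i) as [HIpa' [_ Hst]].
        apply (root_unique O (Ii i) i Y V HO Hobs Hst HIii HIpa').
        -- exact (proj1 HYs).
        -- intros j Hj. pose proof (eq_do_out _ _ _ _ j HYs Hj) as H.
           rewrite (g_obs O Y j Hobs) in H. exact H.
        -- exact (proj1 HVs).
        -- exact (HVout i X V E HVs).
        -- intros j Hj Hji. rewrite (HVpa i X V j E HVs Hj Hji).
           symmetry. apply (eq_do_in _ (Ii i) X Y j HYs). apply HIpa'; assumption.
  - intro Hst. destruct (Hst xi Hxi) as [Xs [[HXs Hatt] _]]. exists Xs.
    assert (Hadm : forall X, InR Rs X -> (forall j, I j = true -> X j = xi j) ->
              admissible Rs (ode_do O I xi) X).
    { intros X HX HXI. split; [exact HX|]. intros j Hj. simpl in Hj |- *.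
      rewrite (Hobs j) in Hj. destruct (I j) eqn:E; [apply HXI; exact E| discriminate]. }
    pose (X0 := (fun j => if I j then xi j else Xs j) : State d).
    assert (HX0 : admissible Rs (ode_do O I xi) X0).
    { apply Hadm.
      - intro j. unfold X0. destruct (I j) eqn:E; [apply Hxi; exact E| apply HXs].
      - intros j Hj. unfold X0. rewrite Hj. reflexivity. }
    destruct (Hatt X0 HX0) as [[Xt Hsol] Hc].
    pose proof (Hc Xt Hsol) as Hconv.
    assert (HXsI : forall j, I j = true -> Xs j = xi j).
    { intros j Hj. apply vec_ext. intro k. symmetry.
      apply (conv_comp Xt Xs j k (xi j k) Hconv).
      intros t Ht. rewrite (clamped_const O I xi X0 Xt j Hsol Hj t Ht).
      unfold X0. rewrite Hj. reflexivity. }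
    assert (HXsf : forall j, I j = false -> ode_f O j Xs = vzero).
    { intros j Hj.
      assert (Hl : loc_lipschitz Rs _ (ode_f (ode_do O I xi) j)).
      { simpl. rewrite Hj. destruct HO as [HOi _]. exact (proj2 (proj2 (HOi j))). }
      pose proof (limit_equil (ode_do O I xi) X0 Xt Xs j Hsol Hconv HXs Hl) as H.
      simpl in H. rewrite Hj in H. exact H. }
    split; [|split; [exact HXs| exact Hatt]].
    intro X. split.
    + intros [HXR HXe].
      assert (HXI : forall j, I j = true -> X j = xi j).
      { intros j Hj. destruct (HV j X HXR) as [V [HVs HhV]]. rewrite HXe, HhV.
        exact (HVin j X V Hj HVs). }
      assert (HXf : forall j, I j = false -> ode_f O j X = vzero).
      { intros j Hj. destruct (HV j X HXR) as [V [HVs HhV]].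
        rewrite <- (HVout j X V Hj HVs).
        destruct HO as [HOi _]. destruct (HOi j) as [Hdep _].
        apply Hdep; [exact HXR| exact (proj1 HVs)|].
        intros l Hl. destruct (Fin.eq_dec l j) as [->|Hne].
        - rewrite HXe, HhV. reflexivity.
        - symmetry. exact (HVpa j X V l Hj HVs Hl Hne). }
      assert (Heq : forall j, ode_f (ode_do O I xi) j X = vzero).
      { intro j. simpl. destruct (I j) eqn:E; [reflexivity| apply HXf; exact E]. }
      destruct (Hatt X (Hadm X HXR HXI)) as [_ Hc'].
      exact (conv_const _ _ (Hc' _ (const_sol (ode_do O I xi) X HXR Heq))).
    + intros ->. split; [exact HXs|]. intro j. symmetry. apply (HD4 j Xs Xs HXs).
      split; [exact HXs|]. intro l. simpl. destruct (Ji j l).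
      * apply vec_ext. intro k. unfold vsub, vzero. ring.
      * rewrite (Hobs l). destruct (I l) eqn:E; simpl.
        -- rewrite (HXsI l E). apply vec_ext. intro k. unfold vsub, vzero. ring.
        -- apply HXsf. exact E.
Qed.
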